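(* Let $\hat A\in\mathbb{R}^{\hat n\times\hat n}$ and $\check A\in\mathbb{R}^{\check n\times\check n}$ be self-similarities of generic cut-and-project schemes $\hat\Lambda=(\hat{\mathcal{L}}\subset\mathbb{R}^{\hat s},\mathbb{R}^{\hat n})$ and $\check\Lambda=(\check{\mathcal{L}}\subset\mathbb{R}^{\check s},\mathbb{R}^{\check n})$, respectively. Then $A=\begin{pmatrix}\hat A&O\\O&\check A\end{pmatrix}$ is a self-similarity of the generic cut-and-project scheme $\Lambda=\hat\Lambda\oplus\check\Lambda$.
   Context: A lattice $\mathcal{L}\subset\mathbb{R}^s$ is $\{L\mathbf{r}:\mathbf{r}\in\mathbb{Z}^s\}$ for a non-singular $L\in\mathbb{R}^{s\times s}$ (an associated matrix). For $1\le n<s$ the scheme $(\mathcal{L}\subset\mathbb{R}^s,\mathbb{R}^n)$ has projections $\pi_\parallel(\mathbf{x})=(x_1,\dots,x_n)^\top$, $\pi_\perp(\mathbf{x})=(x_{n+1},\dots,x_s)^\top$; it is generic if $\pi_\parallel|_{\mathcal{L}}$, $\pi_\perp|_{\mathcal{L}}$ are injective and $\pi_\perp(\mathcal{L})$ is dense in $\mathbb{R}^{s-n}$. $A$ is a self-similarity of a generic scheme with associated matrix $L$ if $A\pi_\parallel(\mathcal{L})\subset\pi_\parallel(\mathcal{L})$ and there exist $C\in\mathbb{Z}^{s\times s}$, $B\in\mathbb{R}^{(s-n)\times(s-n)}$ with $\begin{pmatrix}A&O\\O&B\end{pmatrix}L=LC$. The direct sum $\hat\Lambda\oplus\check\Lambda$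 of schemes with associated matrices $\hat L,\check L$ is the scheme $(\mathcal{L}\subset\mathbb{R}^{\hat s+\check s},\mathbb{R}^{\hat n+\check n})$ whose lattice has associated matrix $L=P\begin{pmatrix}\hat L&O\\O&\check L\end{pmatrix}$, where $P=\begin{pmatrix}I_{\hat n}&O&O&O\\O&O&I_{\hat s-\hat n}&O\\O&I_{\check n}&O&O\\O&O&O&I_{\check s-\check n}\end{pmatrix}$. *)

(* Defs.v *)
From HB Require Import structures.
From mathcomp Require Import all_boot all_order all_algebra.
From mathcomp Require Import all_classical all_reals.
From mathcomp Require Import topology matrix_topology num_topology normedtype.
Set Implicit Arguments. Unset Strict Implicit. Unset Printing Implicit Defensive.
Import Order.TTheory GRing.Theory Num.Theory.
Import numFieldNormedType.Exports.
Local Open Scope ring_scope.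
Local Open Scope classical_set_scope.

(* A cut-and-project scheme (L \subset R^s, R^n) is encoded with s = n + m
   (m = s - n the internal dimension) and an associated matrix
   L : 'M[R]_(n + m). *)

Definition lattice (R : realType) (s : nat) (L : 'M[R]_s) : set 'cV[R]_s :=
  [set L *m map_mx (fun z : int => z%:~R) r | r in [set: 'cV[int]_s]].

Definition pi_par (R : realType) (n m : nat) (x : 'cV[R]_(n + m)) : 'cV[R]_n :=
  usubmx x.
Definition pi_perp (R : realType) (n m : nat) (x : 'cV[R]_(n + m)) : 'cV[R]_m :=
  dsubmx x.

Definition generic_scheme (R : realType) (n m : nat) (L : 'M[R]_(n + m)) :=
  [/\ [/\ (0 < n)%N, (0 < m)%N & L \in unitmx],
      {in lattice L &, injective (@pi_par R n m)},
      {in lattice L &, injective (@pi_perp R n m)} &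
      dense (@pi_perp R n m @` lattice L)].

Definition self_similarity (R : realType) (n m : nat) (L : 'M[R]_(n + m))
    (A : 'M[R]_n) :=
  [/\ generic_scheme L,
      (fun y => A *m y) @` (@pi_par R n m @` lattice L)
         `<=` (@pi_par R n m @` lattice L) &
      exists (C : 'M[int]_(n + m)) (B : 'M[R]_m),
        block_mx A 0 0 B *m L = L *m map_mx (fun z : int => z%:~R) C].

(* The permutation matrix P of the direct sum.  Row blocks:
   n1, n2, m1, m2 (i.e. (n1+n2)+(m1+m2));  column blocks: n1, m1, n2, m2
   (i.e. (n1+m1)+(n2+m2), matching diag(L1, L2)). *)
Definition dsum_P (R : realType) (n1 m1 n2 m2 : nat)
  : 'M[R]_((n1 + n2) + (m1 + m2), (n1 + m1) + (n2 + m2)) :=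
  col_mx
    (col_mx (row_mx (row_mx 1%:M 0) 0) (row_mx 0 (row_mx 1%:M 0)))
    (col_mx (row_mx (row_mx 0 1%:M) 0) (row_mx 0 (row_mx 0 1%:M))).

(* associated matrix P * diag(L1, L2) of the direct sum; the column index
   set (n1+m1)+(n2+m2) is identified with (n1+n2)+(m1+m2) by castmx
   (this only renames the standard basis of Z^s, not the lattice). *)
Definition dsum_mx (R : realType) (n1 m1 n2 m2 : nat)
    (L1 : 'M[R]_(n1 + m1)) (L2 : 'M[R]_(n2 + m2))
  : 'M[R]_((n1 + n2) + (m1 + m2)) :=
  castmx (erefl _, addnACA n1 m1 n2 m2)
    (dsum_P R n1 m1 n2 m2 *m block_mx L1 0 0 L2).

(* Main.v *)
Require Import Defs.
From HB Require Import structures.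
From mathcomp Require Import all_boot all_order all_algebra.
From mathcomp Require Import all_classical all_reals.
From mathcomp Require Import topology matrix_topology num_topology normedtype.
Import numFieldNormedType.Exports.
Local Open Scope ring_scope.

Import GRing.Theory Num.Theory.

Lemma castmx_mulmx (R : realType) m m' a b p (em : m = m') (e : a = b)
  (M : 'M[R]_(m, a)) (V : 'M[R]_(b, p)) :
  castmx (em, e) M *m V = castmx (em, erefl p) (M *m castmx (esym e, erefl p) V).
Proof. subst; by rewrite !castmx_id. Qed.

Definition Jmx (R : realType) (n1 m1 n2 m2 p : nat)
  (X : 'M[R]_(n1 + m1, p)) (Y : 'M[R]_(n2 + m2, p)) : 'M[R]_((n1 + n2) + (m1 + m2), p) :=
  col_mx (col_mx (usubmx X) (usubmx Y)) (col_mx (dsubmx X) (dsubmx Y)).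
Arguments Jmx {R n1 m1 n2 m2 p}.

Lemma dsum_mul (R : realType) (n1 m1 n2 m2 p : nat)
  (L1 : 'M[R]_(n1 + m1)) (L2 : 'M[R]_(n2 + m2)) (V : 'M[R]_((n1 + n2) + (m1 + m2), p)) :
  dsum_mx L1 L2 *m V =
  Jmx (L1 *m usubmx (castmx (esym (addnACA n1 m1 n2 m2), erefl p) V))
      (L2 *m dsubmx (castmx (esym (addnACA n1 m1 n2 m2), erefl p) V)).
Proof.
rewrite /dsum_mx castmx_mulmx castmx_id.
set W := castmx _ V.
rewrite -[in LHS]mulmxA -[W in LHS]vsubmxK mul_block_col !mul0mx addr0 add0r.
set X := L1 *m _. set Y := L2 *m _.
rewrite -[X in LHS]vsubmxK -[Y in LHS]vsubmxK /dsum_P /Jmx.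
rewrite !mul_col_mx !mul_row_col.
by rewrite !mul1mx !mul0mx !addr0 !add0r.
Qed.

Lemma lattice_dsum (R : realType) (n1 m1 n2 m2 : nat)
  (L1 : 'M[R]_(n1 + m1)) (L2 : 'M[R]_(n2 + m2)) x :
  lattice (dsum_mx L1 L2) x <->
  exists y1 y2, [/\ lattice L1 y1, lattice L2 y2 & x = Jmx y1 y2].
Proof.
split.
  case=> r _ <-; rewrite dsum_mul.
  exists (L1 *m usubmx (castmx (esym (addnACA n1 m1 n2 m2), erefl 1%N)
              (map_mx (fun z : int => z%:~R) r))).
  exists (L2 *m dsubmx (castmx (esym (addnACA n1 m1 n2 m2), erefl 1%N)
              (map_mx (fun z : int => z%:~R) r))).
  split => //.
    exists (usubmx (castmx (esym (addnACA n1 m1 n2 m2), erefl 1%N) r)) => //.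
    by rewrite map_usubmx map_castmx.
  exists (dsubmx (castmx (esym (addnACA n1 m1 n2 m2), erefl 1%N) r)) => //.
  by rewrite map_dsubmx map_castmx.
case=> y1 [y2 [[r1 _ <-] [r2 _ <-] ->]].
exists (castmx (addnACA n1 m1 n2 m2, erefl 1%N) (col_mx r1 r2)) => //.
rewrite dsum_mul map_castmx map_col_mx castmx_comp castmx_id.
by rewrite col_mxKu col_mxKd.
Qed.

Lemma blockJ (R : realType) (n1 m1 n2 m2 p : nat)
  (A1 : 'M[R]_n1) (A2 : 'M[R]_n2) (B1 : 'M[R]_m1) (B2 : 'M[R]_m2)
  (X : 'M[R]_(n1 + m1, p)) (Y : 'M[R]_(n2 + m2, p)) :
  block_mx (block_mx A1 0 0 A2) 0 0 (block_mx B1 0 0 B2) *m Jmx X Y =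
  Jmx (block_mx A1 0 0 B1 *m X) (block_mx A2 0 0 B2 *m Y).
Proof.
rewrite -[X]vsubmxK -[Y]vsubmxK /Jmx !col_mxKu !col_mxKd.
by rewrite !mul_block_col !mul0mx !addr0 !add0r !col_mxKu !col_mxKd.
Qed.

Theorem lemma5 (R : realType) (n1 m1 n2 m2 : nat)
  (L1 : 'M[R]_(n1 + m1)) (L2 : 'M[R]_(n2 + m2))
  (A1 : 'M[R]_n1) (A2 : 'M[R]_n2) :
  self_similarity L1 A1 -> self_similarity L2 A2 ->
  self_similarity (dsum_mx L1 L2) (block_mx A1 0 0 A2).
Proof.
move=> [[[n1p m1p U1] inj1 injp1 d1] sub1 [C1 [B1 HC1]]].
move=> [[[n2p m2p U2] inj2 injp2 d2] sub2 [C2 [B2 HC2]]].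
set e := addnACA n1 m1 n2 m2.
have inj0 : forall p (V : 'M[R]_((n1 + n2) + (m1 + m2), p)),
    dsum_mx L1 L2 *m V = 0 -> V = 0.
  move=> p V; rewrite dsum_mul /Jmx => /eqP.
  rewrite !col_mx_eq0 => /andP[/andP[u1 u2] /andP[v1 v2]].
  set W := castmx _ V in u1 u2 v1 v2.
  have h1 : L1 *m usubmx W = 0.
    by rewrite -[L1 *m usubmx W]vsubmxK (eqP u1) (eqP v1) col_mx0.
  have h2 : L2 *m dsubmx W = 0.
    by rewrite -[L2 *m dsubmx W]vsubmxK (eqP u2) (eqP v2) col_mx0.
  have k1 : usubmx W = 0.
    by move/(congr1 (mulmx (invmx L1))): h1; rewrite mulKmx // mulmx0.
  have k2 : dsubmx W = 0.
    by move/(congr1 (mulmx (invmx L2))): h2; rewrite mulKmx // mulmx0.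
  have W0 : W = 0 by rewrite -[W]vsubmxK k1 k2 col_mx0.
  apply/matrixP => i j.
  have := congr1 (fun M : 'M[R]_(_, p) => M (cast_ord (esym e) i) j) W0.
  rewrite /W castmxE !mxE /= => <-.
  by congr (V _ _); apply: val_inj.
split.
- split.
  + split; first by rewrite addn_gt0 n1p.
      by rewrite addn_gt0 m1p.
    rewrite -unitmx_tr -row_free_unit -kermx_eq0; apply/eqP; apply: trmx_inj.
    rewrite trmx0; apply: inj0.
    by apply: trmx_inj; rewrite trmx_mul trmxK mulmx_ker trmx0.
  + move=> x y; rewrite !in_setE.
    move=> /lattice_dsum[a1 [a2 [la1 la2 ->]]] /lattice_dsum[b1 [b2 [lb1 lb2 ->]]].
    rewrite /pi_par /Jmx !col_mxKu => /eq_col_mx[h1 h2].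
    by rewrite (inj1 a1 b1) ?in_setE // (inj2 a2 b2) ?in_setE.
  + move=> x y; rewrite !in_setE.
    move=> /lattice_dsum[a1 [a2 [la1 la2 ->]]] /lattice_dsum[b1 [b2 [lb1 lb2 ->]]].
    rewrite /pi_perp /Jmx !col_mxKd => /eq_col_mx[h1 h2].
    by rewrite (injp1 a1 b1) ?in_setE // (injp2 a2 b2) ?in_setE.
  + move=> O [z Oz] oO.
    have /nbhs_ballP[r r0 sub] : nbhs z O by apply: open_nbhs_nbhs; split.
    have [a1 [Ba1 [y1 ly1 ea1]]] := d1 (ball (usubmx z) r)
        (ex_intro _ (usubmx z) (ballxx _ r0)) (ball_open _ _).
    have [a2 [Ba2 [y2 ly2 ea2]]] := d2 (ball (dsubmx z) r)
        (ex_intro _ (dsubmx z) (ballxx _ r0)) (ball_open _ _).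
    exists (col_mx a1 a2); split.
      apply: sub; split => // i j.
      rewrite -[z]vsubmxK -[i]splitK; case: (fintype.split i) => k /=.
        by rewrite !col_mxEu; apply: Ba1.2.
      by rewrite !col_mxEd; apply: Ba2.2.
    exists (Jmx y1 y2); first by apply/lattice_dsum; exists y1, y2.
    by rewrite /pi_perp /Jmx col_mxKd -ea1 -ea2.
- move=> _ [_ [x lx <-] <-].
  move/lattice_dsum: lx => [y1 [y2 [ly1 ly2 ->]]].
  rewrite /pi_par /Jmx col_mxKu mul_block_col !mul0mx addr0 add0r.
  have [y1' ly1' h1] := sub1 (A1 *m usubmx y1)
      (ex_intro2 _ _ (usubmx y1) (ex_intro2 _ _ y1 ly1 erefl) erefl).
  have [y2' ly2' h2] := sub2 (A2 *m usubmx y2)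
      (ex_intro2 _ _ (usubmx y2) (ex_intro2 _ _ y2 ly2 erefl) erefl).
  exists (Jmx y1' y2'); first by apply/lattice_dsum; exists y1', y2'.
  by rewrite /Jmx col_mxKu; rewrite /pi_par in h1 h2; rewrite h1 h2.
- exists (castmx (e, e) (block_mx C1 0 0 C2)), (block_mx B1 0 0 B2).
  apply: trmx_inj; apply/eqP/mulmxP => u.
  apply: trmx_inj; rewrite !trmx_mul !trmxK.
  set v := u^T.
  rewrite -mulmxA -[RHS]mulmxA !dsum_mul blockJ.
  rewrite !mulmxA HC1 HC2.
  rewrite map_castmx map_block_mx.
  have -> : map_mx (fun z : int => z%:~R) (0 : 'M[int]_(n1 + m1, n2 + m2))
            = 0 :> 'M[R]_(_, _) by apply/matrixP => i j; rewrite !mxE.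
  have -> : map_mx (fun z : int => z%:~R) (0 : 'M[int]_(n2 + m2, n1 + m1))
            = 0 :> 'M[R]_(_, _) by apply/matrixP => i j; rewrite !mxE.
  rewrite castmx_mulmx castmx_comp castmx_id.
  set W := castmx _ v.
  rewrite -[W in RHS]vsubmxK mul_block_col !mul0mx addr0 add0r col_mxKu col_mxKd.
  by rewrite -!mulmxA.
Qed.
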